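(* Let $\mathcal{A}=(T(\Sigma,X),\Rightarrow_\Pi)$ be an abstract reduction system closed under substitutions, and let $(u_1\Rightarrow_{w_1}v_1,\ u_2\Rightarrow_{w_2}v_2)$ be a recurrent pair in $\mathcal{A}$, with $c_1,c_2,x,y,s,t,n_1,n_2,n_3,n_4$ as in the definition of recurrent pair. Then for all $m,n\in\mathbb{N}$ with $n\ge n_2$ there exist $m',n'\in\mathbb{N}$ with $n'\ge n_2$ such that $c_1[m,n]\ (\Rightarrow_{w_1}^{*}\circ\Rightarrow_{w_2})\ c_1[m',n']$.
   Context: Fix a signature $\Sigma$, a countably infinite set $X$ of variables disjoint from $\Sigma$, and two distinct fresh hole constants $\square,\square'\notin\Sigma\cup X$. Terms are elements of $T(\Sigma,X)$; substitutions $\theta$ (maps $X\to T(\Sigma,X)$ moving finitely many variables) act homomorphically; $\mathit{Var}$ denotes the variable set. An abstract reduction system $(A,\Rightarrow_\Pi)$ has $\Rightarrow_\Pi=\bigcup_{\pi\in\Pi}\Rightarrow_\pi$; for $w=\langle\pi_1,\dots,\pi_k\rangle\in\Pi^*$, $\Rightarrow_w=\Rightarrow_{\pi_1}\circ\cdots\circ\Rightarrow_{\pi_k}$ ($\Rightarrow_\epsilon$ the identity), where $\phi\circ\varphi=\{(a,a'')\mid\exists a_1,(a,a_1)\in\phi,(a_1,a'')\in\varphi\}$; $\Rightarrow_w^*$ is the reflexive-transitive closure of $\Rightarrow_w$. It is closed under substitutions if for all $s,t\in A$, $w\in\Pi^*$ and substitutions $\theta$, $s\Rightarrow_w t$ implies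 $s\theta\Rightarrow_w t\theta$. Let $c_1$ be a term over $\Sigma\cup\{\square,\square'\}$ and $X$ containing at least one occurrence of $\square$ and of $\square'$, and $c_1[t,t']$ the result of replacing all $\square$ by $t$ and all $\square'$ by $t'$. Let $c_2$ be a term over $\Sigma\cup\{\square\}$ and $X$ containing at least one $\square$ (and no $\square'$), $c_2[t]$ the result of replacing all $\square$ by $t$, $c_2^0[t]=t$, $c_2^{k+1}[t]=c_2[c_2^k[t]]$. A recurrent pair in $\mathcal{A}$ is a pair of chains $u_1\Rightarrow_{w_1}v_1$ and $u_2\Rightarrow_{w_2}v_2$ ($w_1,w_2\in\Pi^*$) such that: $u_1=c_1[x,c_2[y]]$, $v_1=c_1[c_2^{n_1}[x],y]$, $u_2=c_1[x,c_2^{n_2}[s]]$, $v_2=c_1[c_2^{n_3}[t],c_2^{n_4}[x]]$ for variables $x\neq y$ with $\{x,y\}\cap\mathit{Var}(c_1)=\emptyset$, a term $s$, naturals $n_1,n_2,n_3,n_4$; $\mathit{Var}(c_2)=\mathit{Var}(s)=\emptyset$; $t\in\{x,s\}$; and $n_4\ge n_2$. For $m,n\in\mathbb{N}$, $c_1[m,n]$ denotes the term $c_1[c_2^m[s],c_2^n[s]]$. *)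

(* Defs.v *)
From Stdlib Require Import List Arith Relations.
Import ListNotations.
Set Implicit Arguments.

Section Terms.
Variable F : Type.
Variable arity : F -> nat.

(* Variables X := nat (a countably infinite set disjoint from Sigma). *)
Inductive term : Type :=
| Var : nat -> term
| Fun : F -> list term -> term.

(* well-formed terms: elements of T(Sigma, X) *)
Fixpoint wf (t : term) : bool :=
  match t with
  | Var _ => true
  | Fun f l => Nat.eqb (length l) (arity f) && forallb wf l
  end.

Fixpoint tvars (t : term) : list nat :=
  match t with
  | Var x => [x]
  | Fun _ l => flat_map tvars l
  end.

Fixpoint subst (th : nat -> term) (t : term) : term :=
  match t with
  | Var x => th x
  | Fun f l => Fun f (map (subst th) l)
  end.

Definition is_subst (th : nat -> term) : Prop :=
  (forall x, wf (th x) = true) /\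
  exists dom : list nat, forall x, ~ In x dom -> th x = Var x.

Inductive ctx : Type :=
| CVar : nat -> ctx
| CFun : F -> list ctx -> ctx
| Hole1 : ctx
| Hole2 : ctx.

Fixpoint cwf (c : ctx) : bool :=
  match c with
  | CFun f l => Nat.eqb (length l) (arity f) && forallb cwf l
  | _ => true
  end.

Fixpoint has_hole1 (c : ctx) : bool :=
  match c with
  | Hole1 => true
  | CFun _ l => existsb has_hole1 l
  | _ => false
  end.

Fixpoint has_hole2 (c : ctx) : bool :=
  match c with
  | Hole2 => true
  | CFun _ l => existsb has_hole2 l
  | _ => false
  end.

Fixpoint cvars (c : ctx) : list nat :=
  match c with
  | CVar x => [x]
  | CFun _ l => flat_map cvars l
  | _ => []
  end.

Fixpoint fill (c : ctx) (t t' : term) : term :=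
  match c with
  | CVar x => Var x
  | CFun f l => Fun f (map (fun d => fill d t t') l)
  | Hole1 => t
  | Hole2 => t'
  end.

(* for a context c2 without □': c2[t] *)
Definition fill1 (c : ctx) (t : term) : term := fill c t t.

Fixpoint fill_iter (c : ctx) (k : nat) (t : term) : term :=
  match k with
  | 0 => t
  | S k' => fill1 c (fill_iter c k' t)
  end.

End Terms.

Definition rcomp {A : Type} (phi psi : relation A) : relation A :=
  fun a a'' => exists a1, phi a a1 /\ psi a1 a''.

Fixpoint steps {A Pi : Type} (step : Pi -> relation A) (w : list Pi) : relation A :=
  match w with
  | [] => fun a b => a = b
  | p :: w' => rcomp (step p) (steps step w')
  end.

Definition ars_on_terms {F Pi : Type} (arity : F -> nat)
  (step : Pi -> relation (term F)) : Prop :=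
  forall p s t, step p s t -> wf arity s = true /\ wf arity t = true.

Definition closed_under_subst {F Pi : Type} (arity : F -> nat)
  (step : Pi -> relation (term F)) : Prop :=
  forall (w : list Pi) (s t : term F) (th : nat -> term F),
    wf arity s = true -> wf arity t = true -> is_subst arity th ->
    steps step w s t -> steps step w (subst th s) (subst th t).

(* Main.v *)
Require Import Defs.
From Stdlib Require Import List Arith Relations Lia.
Import ListNotations.

Section H.
Variable F : Type.
Variable arity : F -> nat.

Fixpoint ctx_ind2 (P : ctx F -> Prop) (hv : forall n, P (CVar F n))
  (hf : forall f l, Forall P l -> P (CFun f l)) (h1 : P (Hole1 F)) (h2 : P (Hole2 F))
  (c : ctx F) : P c :=
  match c with
  | CVar _ n => hv n
  | CFun f l => hf f l ((fix go (l : list (ctx F)) : Forall P l :=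
        match l with [] => Forall_nil _ | a :: l' => Forall_cons _ (ctx_ind2 P hv hf h1 h2 a) (go l') end) l)
  | Hole1 _ => h1
  | Hole2 _ => h2
  end.

Fixpoint term_ind2 (P : term F -> Prop) (hv : forall n, P (Var F n))
  (hf : forall f l, Forall P l -> P (Fun f l)) (t : term F) : P t :=
  match t with
  | Var _ n => hv n
  | Fun f l => hf f l ((fix go (l : list (term F)) : Forall P l :=
        match l with [] => Forall_nil _ | a :: l' => Forall_cons _ (term_ind2 P hv hf a) (go l') end) l)
  end.

Lemma subst_fill (th : nat -> term F) A B (c : ctx F) :
  (forall z, In z (cvars c) -> th z = Var F z) ->
  subst th (fill c A B) = fill c (subst th A) (subst th B).
Proof.
  revert c. refine (ctx_ind2 _ _ _ _ _); simpl; intros.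
  - apply H; auto.
  - rename H into HF, H0 into HZ. f_equal. rewrite map_map. induction HF as [|a l Ha HF IH]; simpl; auto.
    f_equal.
    + apply Ha. intros; apply HZ; simpl; apply in_or_app; auto.
    + apply IH. intros; apply HZ; simpl; apply in_or_app; auto.
  - auto.
  - auto.
Qed.

Lemma subst_closed (th : nat -> term F) (t : term F) :
  tvars t = nil -> subst th t = t.
Proof.
  revert t. refine (term_ind2 _ _ _); simpl; intros.
  - discriminate.
  - rename H into HF, H0 into HV. f_equal. induction HF as [|a l Ha HF IH]; simpl; auto.
    simpl in HV. destruct (tvars a) eqn:E; [|discriminate].
    simpl in HV. rewrite Ha by auto. f_equal. auto.
Qed.

Lemma wf_fill (c : ctx F) A B :
  cwf arity c = true -> wf arity A = true -> wf arity B = true -> wf arity (fill c A B) = true.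
Proof.
  revert c. refine (ctx_ind2 _ _ _ _ _); simpl; intros; auto.
  rename H into HF. apply andb_prop in H0 as [H3 H4]. apply andb_true_intro; split.
  - rewrite length_map; auto.
  - clear H3. induction HF as [|a l Ha HF IH]; simpl in *; auto.
    apply andb_prop in H4 as [H5 H6]. rewrite Ha by auto. simpl. auto.
Qed.

Lemma fill_iter_add (c : ctx F) a b t :
  fill_iter c a (fill_iter c b t) = fill_iter c (a + b) t.
Proof. induction a; simpl; auto. rewrite IHa; auto. Qed.

Lemma subst_fill_iter (th : nat -> term F) (c : ctx F) k t :
  cvars c = nil -> subst th (fill_iter c k t) = fill_iter c k (subst th t).
Proof.
  intros Hc. induction k; simpl; auto. unfold fill1.
  rewrite subst_fill, IHk; auto. rewrite Hc; simpl; tauto.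
Qed.

Lemma wf_fill_iter (c : ctx F) k t :
  cwf arity c = true -> wf arity t = true -> wf arity (fill_iter c k t) = true.
Proof. intros; induction k; simpl; auto. unfold fill1; apply wf_fill; auto. Qed.

End H.


Theorem proposition12
  (F : Type) (arity : F -> nat) (Pi : Type) (step : Pi -> relation (term F))
  (Hars : ars_on_terms arity step)
  (Hclosed : closed_under_subst arity step)
  (c1 c2 : ctx F) (x y : nat) (s t : term F) (n1 n2 n3 n4 : nat)
  (w1 w2 : list Pi)
  (* c1 : a term over Sigma ∪ {□,□'} and X with at least one □ and one □' *)
  (Hc1wf : cwf arity c1 = true)
  (Hc1h1 : has_hole1 c1 = true) (Hc1h2 : has_hole2 c1 = true)
  (* c2 : a term over Sigma ∪ {□} and X with at least one □ and no □' *)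
  (Hc2wf : cwf arity c2 = true)
  (Hc2h1 : has_hole1 c2 = true) (Hc2h2 : has_hole2 c2 = false)
  (Hswf : wf arity s = true)
  (* side conditions of a recurrent pair *)
  (Hxy : x <> y)
  (Hxc1 : ~ In x (cvars c1)) (Hyc1 : ~ In y (cvars c1))
  (Hc2vars : cvars c2 = nil) (Hsvars : tvars s = nil)
  (Ht : t = Var F x \/ t = s)
  (Hn : n2 <= n4)
  (* the two chains u1 =>_{w1} v1 and u2 =>_{w2} v2 *)
  (Hchain1 : steps step w1
               (fill c1 (Var F x) (fill1 c2 (Var F y)))
               (fill c1 (fill_iter c2 n1 (Var F x)) (Var F y)))
  (Hchain2 : steps step w2
               (fill c1 (Var F x) (fill_iter c2 n2 s))
               (fill c1 (fill_iter c2 n3 t) (fill_iter c2 n4 (Var F x)))) :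
  forall m n : nat, n2 <= n ->
    exists m' n' : nat, n2 <= n' /\
      rcomp (clos_refl_trans _ (steps step w1)) (steps step w2)
        (fill c1 (fill_iter c2 m s) (fill_iter c2 n s))
        (fill c1 (fill_iter c2 m' s) (fill_iter c2 n' s)).
Proof.
  set (th := fun a b z => if Nat.eqb z x then fill_iter c2 a s
                          else if Nat.eqb z y then fill_iter c2 b s else Var F z).
  assert (Hth : forall a b, is_subst arity (th a b)).
  { intros a b. split.
    - intros z. unfold th. destruct (Nat.eqb z x); [apply wf_fill_iter; auto|].
      destruct (Nat.eqb z y); [apply wf_fill_iter; auto|reflexivity].
    - exists [x; y]. intros z Hz. unfold th.
      destruct (Nat.eqb_spec z x). { subst; simpl in Hz; tauto. }
      destruct (Nat.eqb_spec z y). { subst; simpl in Hz; tauto. } reflexivity. }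
  assert (Hthx : forall a b, th a b x = fill_iter c2 a s).
  { intros; unfold th; rewrite Nat.eqb_refl; auto. }
  assert (Hthy : forall a b, th a b y = fill_iter c2 b s).
  { intros; unfold th. destruct (Nat.eqb_spec y x); [congruence|]. rewrite Nat.eqb_refl; auto. }
  assert (Hc1f : forall a b z, In z (cvars c1) -> th a b z = Var F z).
  { intros a b z Hz. unfold th. destruct (Nat.eqb_spec z x); [subst; tauto|].
    destruct (Nat.eqb_spec z y); [subst; tauto|]. auto. }
  assert (Hc2f : forall (th' : nat -> term F) z, In z (cvars c2) -> th' z = Var F z).
  { rewrite Hc2vars; simpl; tauto. }
  assert (Hwfx : wf arity (Var F x) = true) by reflexivity.
  assert (Hwfy : wf arity (Var F y) = true) by reflexivity.
  assert (step1 : forall a b, steps step w1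
     (fill c1 (fill_iter c2 a s) (fill_iter c2 (S b) s))
     (fill c1 (fill_iter c2 (n1 + a) s) (fill_iter c2 b s))).
  { intros a b.
    assert (H := Hclosed w1 _ _ (th a b)
      (wf_fill _ _ _ _ _ Hc1wf Hwfx (wf_fill _ _ _ _ _ Hc2wf Hwfy Hwfy))
      (wf_fill _ _ _ _ _ Hc1wf (wf_fill_iter _ _ _ _ _ Hc2wf Hwfx) Hwfy) (Hth a b) Hchain1).
    unfold fill1 in H. rewrite !subst_fill in H by auto. rewrite subst_fill_iter in H by auto.
    simpl in H. rewrite Hthx, Hthy, fill_iter_add in H. exact H. }
  assert (iter : forall k a b, clos_refl_trans _ (steps step w1)
     (fill c1 (fill_iter c2 a s) (fill_iter c2 (k + b) s))
     (fill c1 (fill_iter c2 (k * n1 + a) s) (fill_iter c2 b s))).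
  { induction k; intros a b; simpl. apply rt_refl.
    eapply rt_trans. apply rt_step. apply step1.
    replace (n1 + k * n1 + a) with (k * n1 + (n1 + a)) by lia. apply IHk. }
  intros m n Hmn.
  assert (Hwft : wf arity t = true) by (destruct Ht as [-> | ->]; auto).
  set (M := (n - n2) * n1 + m).
  assert (H := Hclosed w2 _ _ (th M 0)
      (wf_fill _ _ _ _ _ Hc1wf Hwfx (wf_fill_iter _ _ _ _ _ Hc2wf Hswf))
      (wf_fill _ _ _ _ _ Hc1wf (wf_fill_iter _ _ _ _ _ Hc2wf
           Hwft)
           (wf_fill_iter _ _ _ _ _ Hc2wf Hwfx)) (Hth M 0) Hchain2).
  rewrite !subst_fill in H by auto.
  rewrite !subst_fill_iter in H by auto. simpl in H.
  rewrite Hthx, fill_iter_add, (subst_closed _ _ _ Hsvars) in H.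
  destruct Ht as [-> | ->]; simpl in H.
  - rewrite Hthx, fill_iter_add in H.
    exists (n3 + M), (n4 + M). split; [lia|].
    exists (fill c1 (fill_iter c2 M s) (fill_iter c2 n2 s)). split; auto.
    replace n with ((n - n2) + n2) at 1 by lia. apply iter.
  - rewrite (subst_closed _ _ _ Hsvars) in H.
    exists n3, (n4 + M). split; [lia|].
    exists (fill c1 (fill_iter c2 M s) (fill_iter c2 n2 s)). split; auto.
    replace n with ((n - n2) + n2) at 1 by lia. apply iter.
Qed.
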